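(* Let $G$ be a finite, non-empty, connected, simple undirected graph, and run the Greedy Radial Partitioning procedure described in the context on $G$. Then the procedure terminates, the sets $\mathcal V_1,\ldots,\mathcal V_m$ it returns form a partition of the vertex set of $G$, and for each $k$ the subgraph of $G$ induced by $\mathcal V_k$ is a tree.
   Context: Greedy Radial Partitioning procedure. Set $k=1$ and let $H:=G$. START: set $\mathcal V_k=\emptyset$ and let $S$ be an empty stack whose entries are pairs (node, parent). Select an arbitrary (e.g. random) node $v$ of $H$, set $\mathcal V_k\gets\{v\}$, and push every neighbor of $v$ in $H$ onto $S$ with parent $v$. While $S$ is non-empty: pop an entry $(u,p)$ from $S$; if no neighbor of $u$ in $H$ other than its parent $p$ belongs to $\mathcal V_k$, then set $\mathcal V_k\gets\mathcal V_k\cup\{u\}$ and push every neighbor of $u$ in $H$ that is not in $\mathcal V_k$ onto $S$ with parent $u$. When $S$ is empty, save $\mathcal V_k$ as a part, delete the vertices of $\mathcal V_k$ from $H$ (i.e. replace $H$ by the subgraph induced on the remaining vertices); if $H$ is non-empty, set $k\gets k+1$ and go to START; otherwise return all saved sets $\mathcal V_1,\ldots,\mathcal V_m$. A partition of the vertex set in which each part induces a tree is called a radial partitioning. *)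

(* Defs.v *)
From mathcomp Require Import all_boot.
Set Implicit Arguments. Unset Strict Implicit. Unset Printing Implicit Defensive.

(* A finite simple undirected graph is a finType T of vertices with an
   edge relation e : rel T that is symmetric and irreflexive. *)

Section GRP.
Variables (T : finType) (e : rel T).

Definition induced (X : {set T}) : rel T :=
  [rel x y | [&& x \in X, y \in X & e x y]].

Definition induced_connected (X : {set T}) : Prop :=
  forall x y, x \in X -> y \in X -> connect (induced X) x y.

Definition induced_acyclic (X : {set T}) : Prop :=
  forall c : seq T, {subset c <= X} -> uniq c -> 3 <= size c -> ~~ cycle e c.

Definition induced_tree (X : {set T}) : Prop :=
  X != set0 /\ induced_connected X /\ induced_acyclic X.

(* State of the Greedy Radial Partitioning procedure:
   - saved parts V_1..V_(k-1) (in order),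
   - the vertex set of the current graph H,
   - None when at START, or Some (V_k, S) while running the inner loop;
     the stack S is a list of (node, parent) pairs whose head is the top. *)
Record grp_state := GRPState {
  gs_parts : seq {set T};
  gs_H : {set T};
  gs_cur : option ({set T} * seq (T * T))
}.

Definition nbrs (H : {set T}) (u : T) : {set T} := [set w in H | e u w].

(* Non-determinism: the choice of the start
   node v, and the (arbitrary) order in which neighbours are pushed onto
   the stack (any duplicate-free enumeration [s] of the set to push). *)
Inductive grp_step : grp_state -> grp_state -> Prop :=
| grp_start (ps : seq {set T}) (H : {set T}) (v : T) (s : seq T) :
    v \in H ->
    perm_eq s (enum (nbrs H v)) ->
    grp_step (GRPState ps H None)
             (GRPState ps H (Some ([set v], [seq (w, v) | w <- s])))
| grp_pop_add (ps : seq {set T}) (H V : {set T}) (u p : T) (S : seq (T * T)) (s : seq T) :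
    [forall w, ((w \in nbrs H u) && (w != p)) ==> (w \notin V)] ->
    perm_eq s (enum [set w in nbrs H u | w \notin u |: V]) ->
    grp_step (GRPState ps H (Some (V, (u, p) :: S)))
             (GRPState ps H (Some (u |: V, [seq (w, u) | w <- s] ++ S)))
| grp_pop_skip (ps : seq {set T}) (H V : {set T}) (u p : T) (S : seq (T * T)) :
    ~~ [forall w, ((w \in nbrs H u) && (w != p)) ==> (w \notin V)] ->
    grp_step (GRPState ps H (Some (V, (u, p) :: S)))
             (GRPState ps H (Some (V, S)))
| grp_save (ps : seq {set T}) (H V : {set T}) :
    grp_step (GRPState ps H (Some (V, [::])))
             (GRPState (rcons ps V) (H :\: V) None).

Definition grp_init : grp_state := GRPState [::] [set: T] None.

Definition grp_final (st : grp_state) : bool :=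
  (gs_H st == set0) && (gs_cur st == None).

Inductive grp_reach : grp_state -> grp_state -> Prop :=
| grp_reach_refl st : grp_reach st st
| grp_reach_step st1 st2 st3 :
    grp_step st1 st2 -> grp_reach st2 st3 -> grp_reach st1 st3.

End GRP.

(* Main.v *)
Require Import Defs.
From mathcomp Require Import all_boot zify.

Set Implicit Arguments. Unset Strict Implicit.
Section Aux.
Variables (T : finType) (e : rel T).
Hypotheses (e_sym : symmetric e) (e_irr : irreflexive e).

Lemma tree_single v : induced_tree e [set v].
Proof.
split; first by apply/set0Pn; exists v; rewrite inE.
split.
  by move=> x y; rewrite !inE => /eqP -> /eqP ->; apply: connect0.
move=> c sub u3 sz.
have : size c <= size [:: v].
  by apply: uniq_leq_size => // x /sub; rewrite !inE.
by move=> /= h; move: (leq_trans sz h).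
Qed.

Lemma tree_add V u p : induced_tree e V -> p \in V -> e p u -> u \notin V ->
  (forall w, w \in V -> e u w -> w = p) -> induced_tree e (u |: V).
Proof.
move=> [ne [con acy]] pV epu uV leaf.
split; first by apply/set0Pn; exists u; rewrite !inE eqxx.
have sub : forall x y, connect (induced e V) x y -> connect (induced e (u |: V)) x y.
  move=> x y; apply: connect_sub => a b /=; rewrite /induced /= => /and3P [aV bV eab].
  by apply: connect1; rewrite /induced /= !inE aV bV eab !orbT.
have pu : connect (induced e (u |: V)) p u.
  by apply: connect1; rewrite /induced /= !inE pV eqxx epu !orbT.
have up : connect (induced e (u |: V)) u p.
  by apply: connect1; rewrite /induced /= !inE pV eqxx e_sym epu !orbT.
split.
  move=> x y; rewrite !inE => /predU1P [->|xV] /predU1P [->|yV].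
  - exact: connect0.
  - by apply: connect_trans up (sub _ _ (con _ _ pV yV)).
  - by apply: connect_trans (sub _ _ (con _ _ xV pV)) pu.
  - by apply: sub; apply: con.
move=> c csub cu csz; apply/negP => ccyc.
case uc: (u \in c); last first.
  suff: ~~ cycle e c by rewrite ccyc.
  apply: acy => // x xc.
  have := csub x xc; rewrite !inE => /predU1P [xu|//].
  by move: xc; rewrite xu uc.
case/rot_to: uc => i s' hrot.
have := rot_cycle i e c; rewrite ccyc hrot => cyc'.
have := rot_uniq i c; rewrite cu hrot => u'.
have := size_rot i c; rewrite hrot => sz'.
have msub : forall x, x \in s' -> x \in V.
  move=> x xs; have : x \in rot i c by rewrite hrot inE xs orbT.
  rewrite mem_rot => /csub; rewrite !inE => /predU1P [xu|//].
  by move: u'; rewrite /= -xu xs.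
have sz3 : 2 < size (u :: s') by rewrite sz'.
case: s' hrot cyc' u' sz' msub sz3 => [|x [|y r]] // hrot cyc' u' sz' msub _.
move: cyc'; rewrite /= rcons_path => /and3P [eux _ /andP [_ elu]].
have xV : x \in V by apply: msub; rewrite inE eqxx.
have lr : last y r \in y :: r by apply: mem_last.
have lV : last y r \in V by apply: msub; rewrite inE lr orbT.
have hl : last y r = p by apply: leaf => //; rewrite e_sym.
have hx := leaf _ xV eux.
move: u' => /= /andP [_ /andP [xn _]].
by move: xn; rewrite hx -hl lr.
Qed.


Definition InvC (H V : {set T}) (Sk : seq (T * T)) : Prop :=
  [/\ V \subset H, induced_tree e V, uniq Sk,
   forall u p, (u, p) \in Sk -> [&& p \in V, u \in H & e p u] &
   forall u p, (u, p) \in Sk -> u \in V -> exists2 w, w \in V & (w != p) && e u w].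

Definition InvP (ps : seq {set T}) (H : {set T}) : Prop :=
  [/\ uniq ps, forall X, X \in ps -> induced_tree e X,
   trivIset [set X in ps] & cover [set X in ps] = ~: H].

Definition Inv (st : grp_state T) : Prop :=
  InvP (gs_parts st) (gs_H st) /\
  match gs_cur st with None => True | Some (V, Sk) => InvC (gs_H st) V Sk end.

Lemma check_fail H V Sk u p : InvC H V Sk -> (u, p) \in Sk -> u \in V ->
  ~~ [forall w, ((w \in nbrs e H u) && (w != p)) ==> (w \notin V)].
Proof.
move=> [VH _ _ _ I5] up uV; have [w wV /andP [wp euw]] := I5 _ _ up uV.
apply/forallP => /(_ w); rewrite /nbrs !inE wV (subsetP VH _ wV) euw wp.
by [].
Qed.

Lemma check_pass H V Sk u p : InvC H V Sk ->
  [forall w, ((w \in nbrs e H u) && (w != p)) ==> (w \notin V)] ->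
  forall w, w \in V -> e u w -> w = p.
Proof.
move=> [VH _ _ _ _] /forallP ch w wV euw; apply/eqP; apply: contraT => wp.
by have := ch w; rewrite /nbrs !inE (subsetP VH _ wV) euw wp wV.
Qed.

Lemma inv_init : Inv (grp_init T).
Proof.
split => //; split => //.
- by rewrite /trivIset /cover !big_pred0 ?cards0 // => x; rewrite inE.
- apply/setP => x; rewrite !inE /cover; apply/bigcupP => -[X]; by rewrite inE.
Qed.

Lemma inv_step st st' : grp_step e st st' -> Inv st -> Inv st'.
Proof.
case=> {st st'}.
-
  move=> ps H v s vH ps_s [IP _]; split => //=; split.
  + by apply/subsetP => x; rewrite inE => /eqP ->.
  + exact: tree_single.
  + by rewrite map_inj_uniq ?(perm_uniq ps_s) ?enum_uniq // => a b [].
  + move=> u p /mapP [w ws [-> ->]]; move: ws; rewrite (perm_mem ps_s) mem_enum.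
    by rewrite /nbrs !inE eqxx => /andP [-> ->].
  + move=> u p /mapP [w ws [-> ->]]; move: ws; rewrite (perm_mem ps_s) mem_enum.
    by rewrite /nbrs !inE => /andP [_ evw] /eqP wv; move: evw; rewrite wv e_irr.
-
  move=> ps H V u p Sk s ch ps_s [IP IC]; simpl in IP, IC; split => //=.
  have uS : (u, p) \in (u, p) :: Sk by rewrite inE eqxx.
  have uV : u \notin V by apply/negP => uV; move: (check_fail IC uS uV); rewrite ch.
  have leaf := check_pass IC ch.
  case: IC => VH tr uq I4 I5.
  have /and3P [pV uH epu] := I4 _ _ uS.
  have sin : forall w, w \in s -> [&& w \in H, e u w & w \notin u |: V].
    by move=> w; rewrite (perm_mem ps_s) mem_enum /nbrs !inE andbA.
  split.
  + by rewrite subUset sub1set uH VH.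
  + exact: (tree_add tr pV epu uV leaf).
  + rewrite cat_uniq map_inj_uniq ?(perm_uniq ps_s) ?enum_uniq; last by move=> a b [].
    move: uq; rewrite cons_uniq => /andP [_ ->]; rewrite andbT /=.
    apply/hasPn => -[a b] abS; apply/mapP => -[w _ [_ bu]].
    have := I4 a b; rewrite inE abS orbT => /(_ isT) /and3P [bV _ _].
    by move: uV; rewrite -bu bV.
  + move=> a b; rewrite mem_cat => /orP [/mapP [w ws [-> ->]]|abS].
      by have /and3P [-> -> _] := sin w ws; rewrite !inE eqxx.
    by have := I4 a b; rewrite inE abS orbT => /(_ isT) /and3P [bV -> ->];
       rewrite !inE bV orbT.
  + move=> a b; rewrite mem_cat => /orP [/mapP [w ws [-> ->]]|abS].
      by move=> wU; have /and3P [_ _ wn] := sin w ws; rewrite wU in wn.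
    rewrite in_setU1 => /predU1P [au|aV].
      subst a; exists p; first by rewrite !inE pV orbT.
      rewrite e_sym epu andbT; apply/eqP => bp; subst b.
      by move: uq; rewrite cons_uniq abS.
    have abS2 : (a, b) \in (u, p) :: Sk by rewrite inE abS orbT.
    have [w wV wb] := I5 a b abS2 aV.
    by exists w => //; rewrite !inE wV orbT.
-
  move=> ps H V u p Sk _ [IP [VH tr uq I4 I5]]; split => //=; split => //.
  + by move: uq; rewrite cons_uniq => /andP [].
  + by move=> a b abS; apply: I4; rewrite inE abS orbT.
  + by move=> a b abS; apply: I5; rewrite inE abS orbT.
-
  move=> ps H V [[uq trs triv cov] [VH tr _ _ _]]; split => //=.
  have Vne : V != set0 by case: tr.
  have disj : forall X, X \in ps -> [disjoint V & X].
    move=> X Xps; rewrite -setI_eq0; apply/eqP/setP => x; rewrite !inE.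
    apply/negP => /andP [xV xX].
    have : x \in cover [set X in ps] by apply/bigcupP; exists X; rewrite ?inE.
    by rewrite cov inE (subsetP VH _ xV).
  have Vps : V \notin ps.
    apply/negP => Vin; have := disj V Vin; rewrite -setI_eq0 setIid.
    by move/negPf: Vne => ->.
  have eqS : [set X in rcons ps V] = V |: [set X in ps].
    by apply/setP => X; rewrite !inE mem_rcons inE.
  split.
  + by rewrite rcons_uniq Vps uq.
  + by move=> X; rewrite mem_rcons inE => /predU1P [->|]; [exact: tr| exact: trs].
  + rewrite eqS; apply: (proj1 (trivIsetU1 _ triv _)).
      by move=> X; rewrite inE; apply: disj.
    by rewrite inE; apply/negP => /trs [] /eqP.
  + rewrite eqS; apply/setP => x; rewrite !inE; apply/bigcupP/idP.
      move=> [X]; rewrite !inE => /predU1P [->|Xps] xX.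
        by rewrite xX.
      have : x \in cover [set X in ps] by apply/bigcupP; exists X; rewrite ?inE.
      by rewrite cov inE => /negPf ->; rewrite andbF.
    case xV : (x \in V) => /=.
      by move=> _; exists V; rewrite ?inE ?eqxx.
    move=> xH.
    have : x \in cover [set X in ps] by rewrite cov inE.
    by move/bigcupP => [X XP xX]; exists X; rewrite // !inE; rewrite inE in XP; rewrite XP orbT.
Qed.

Lemma reach_inv st st' : grp_reach e st st' -> Inv st -> Inv st'.
Proof. by elim=> // s1 s2 s3 h _ IH I; apply: IH; apply: inv_step h I. Qed.

Lemma progress st : grp_final st \/ exists st', grp_step e st st'.
Proof.
case: st => ps H [[V [|[u p] Sk]]|].
- by right; eexists; apply: grp_save.
- right; case ch : [forall w, ((w \in nbrs e H u) && (w != p)) ==> (w \notin V)].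
    by eexists; apply: grp_pop_add; [rewrite ch | apply: perm_refl].
  by eexists; apply: grp_pop_skip; rewrite ch.
- case: (set_0Vmem H) => [->|[v vH]]; first by left; rewrite /grp_final /= eqxx.
  by right; eexists; apply: grp_start; [exact: vH | apply: perm_refl].
Qed.

Definition R (st' st : grp_state T) := grp_step e st st'.

Lemma acc_all h : forall ps H cur, Inv (GRPState ps H cur) -> #|H| <= h ->
  Acc R (GRPState ps H cur).
Proof.
elim/ltn_ind: h => h IHh ps H cur.
have some : forall k V Sk, Inv (GRPState ps H (Some (V, Sk))) -> #|H| <= h ->
    #|H| - #|V| = k -> Acc R (GRPState ps H (Some (V, Sk))).
  elim/ltn_ind => k IHk V Sk.
  move: {2}(size Sk) (erefl (size Sk)) => n; elim/ltn_ind: n V Sk => n IHn V Sk sz I hH hk.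
  constructor => st' Hs; have I' := inv_step Hs I; inversion Hs; subst.
  -
    case: I => _ /= IC.
    have uS : (u, p) \in (u, p) :: S by rewrite inE eqxx.
    have uV : u \notin V by apply/negP => uV; move: (check_fail IC uS uV); rewrite H6.
    have [_ /= [VH' _ _ _ _]] := I'.
    have c1 := subset_leq_card VH'; rewrite cardsU1 uV /= in c1.
    apply: (IHk (#|H| - #|u |: V|)) => //; rewrite cardsU1 uV /=; lia.
  - by apply: (IHn (size S) (ltnSn _) V S erefl I' hH erefl).
  - case: I => _ /= [VH [Vne _] _ _ _].
    apply: (IHh #|H :\: V|) => //.
    rewrite cardsD (setIidPr VH).
    have : 0 < #|V| by rewrite card_gt0.
    have := subset_leq_card VH; lia.
case: cur => [[V0 Sk0]|] I hH; first by apply: (some _ V0 Sk0 I hH erefl).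
constructor => st' Hs; have I' := inv_step Hs I; inversion Hs; subst.
by apply: (some _ _ _ I' hH erefl).
Qed.

End Aux.
Unset Implicit Arguments. Set Strict Implicit.

Theorem theorem1 (T : finType) (e : rel T)
  (e_sym : symmetric e) (e_irr : irreflexive e)
  (T_nonempty : 0 < #|T|)
  (G_connected : forall x y : T, connect e x y) :
  (* termination: there is no infinite run *)
  Acc (fun st' st => grp_step e st st') (grp_init T) /\
  (* the procedure never gets stuck before returning *)
  (forall st, grp_reach e (grp_init T) st ->
     grp_final st \/ exists st', grp_step e st st') /\
  (* correctness of every returned output V_1, ..., V_m *)
  (forall ps : seq {set T},
     grp_reach e (grp_init T) (GRPState ps set0 None) ->
     uniq ps /\ partition [set X in ps] [set: T] /\
     (forall X, X \in ps -> induced_tree e X)).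
Proof.
split; first exact: (acc_all e_sym e_irr (inv_init e) (leqnn _)).
split; first by move=> st _; apply: progress.
move=> ps /(reach_inv e_sym e_irr) /(_ (inv_init e)) [[uq trs triv cov] _].
split => //; split => //.
rewrite /partition triv cov setC0 eqxx /=; apply/negP; rewrite inE => /trs [].
by rewrite eqxx.
Qed.
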